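(* Let $f\colon I\to(0,\infty)$ be a smooth function on an open interval $I\subseteq\mathbb{R}$, and consider on $\mathrm{Sol}\times I$ (or on $C\times I$ for any compact $\mathrm{Sol}$ $3$-manifold $C$) the metric \[ g=dt^2+f(t)^2\,dz^2+e^{-2t}\left(e^{-2z}dx^2+e^{2z}dy^2\right).\] Suppose that for all $t\in I$: (a) $f(t)>1$; (b) $f'(t)<0$; (c) $f''(t)>0$; (d) $1-f(t)f'(t)>\left(1+\dfrac{f'(t)}{f(t)}\right)^2$. Then $g$ has strictly negative sectional curvature at every point. *)

(* Defs.v *)
From Stdlib Require Import Reals Lra ClassicalEpsilon.
Open Scope R_scope.

(** Points of R^4 / tangent vectors: functions nat -> R, only indices 0..3 matter.
    Coordinates: index 0 = t, 1 = z, 2 = x, 3 = y. *)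
Definition pt := nat -> R.

Definition upd (p : pt) (i : nat) (s : R) : pt :=
  fun j => if Nat.eqb j i then s else p j.

(** Partial derivative d/dp_i of F at p (chosen classically; it is the
    derivative whenever that derivative exists). *)
Definition pd (F : pt -> R) (i : nat) (p : pt) : R :=
  epsilon (inhabits 0)
    (fun l => derivable_pt_lim (fun s => F (upd p i s)) (p i) l).

Definition sum4 (F : nat -> R) : R := F 0%nat + F 1%nat + F 2%nat + F 3%nat.

Definition christoffel (g ginv : nat -> nat -> pt -> R) (k i j : nat) (p : pt) : R :=
  sum4 (fun l => / 2 * ginv k l p *
         (pd (g j l) i p + pd (g i l) j p - pd (g i j) l p)).

(** R^m_{ijk}, where R(d_i,d_j)d_k = sum_m R^m_{ijk} d_m and
    R(X,Y)Z = nabla_X nabla_Y Z - nabla_Y nabla_X Z - nabla_[X,Y] Z. *)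
Definition riemann_up (g ginv : nat -> nat -> pt -> R) (m i j k : nat) (p : pt) : R :=
  pd (christoffel g ginv m j k) i p - pd (christoffel g ginv m i k) j p
  + sum4 (fun n => christoffel g ginv n j k p * christoffel g ginv m i n p
                   - christoffel g ginv n i k p * christoffel g ginv m j n p).

Definition riemann (g ginv : nat -> nat -> pt -> R) (i j k l : nat) (p : pt) : R :=
  sum4 (fun m => riemann_up g ginv m i j k p * g m l p).

Definition gdot (g : nat -> nat -> pt -> R) (p : pt) (u v : pt) : R :=
  sum4 (fun i => sum4 (fun j => g i j p * u i * v j)).

Definition sectional_curvature (g ginv : nat -> nat -> pt -> R) (p u v : pt) : R :=
  sum4 (fun i => sum4 (fun j => sum4 (fun k => sum4 (fun l =>
     riemann g ginv i j k l p * u i * v j * v k * u l))))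
  / (gdot g p u u * gdot g p v v - (gdot g p u v) ^ 2).

Definition lin_indep4 (u v : pt) : Prop :=
  forall a b : R, (forall i, (i < 4)%nat -> a * u i + b * v i = 0) -> a = 0 /\ b = 0.

Definition sol_diag (f : R -> R) (i : nat) (p : pt) : R :=
  match i with
  | 0%nat => 1
  | 1%nat => (f (p 0%nat)) ^ 2
  | 2%nat => exp (-2 * p 0%nat) * exp (-2 * p 1%nat)
  | _ => exp (-2 * p 0%nat) * exp (2 * p 1%nat)
  end.

Definition sol_metric (f : R -> R) (i j : nat) (p : pt) : R :=
  if Nat.eqb i j then sol_diag f i p else 0.

Definition sol_metric_inv (f : R -> R) (i j : nat) (p : pt) : R :=
  if Nat.eqb i j then / sol_diag f i p else 0.

Definition is_open_interval (I : R -> Prop) : Prop :=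
  (exists t, I t) /\
  (forall a b t, I a -> I b -> a <= t <= b -> I t) /\
  (forall t, I t -> exists eps, eps > 0 /\ forall s, Rabs (s - t) < eps -> I s).

Definition smooth_on_with (I : R -> Prop) (f : R -> R) (D : nat -> R -> R) : Prop :=
  (forall t, I t -> D 0%nat t = f t) /\
  (forall n t, I t -> derivable_pt_lim (D n) t (D (S n) t)).

(* Main.v *)
Require Import Defs.
From Stdlib Require Import Reals Lra Lia ClassicalEpsilon.
Open Scope R_scope.

Lemma pd_eq F i p l : derivable_pt_lim (fun s => F (upd p i s)) (p i) l -> pd F i p = l.
Proof.
  intro H. unfold pd.
  pose proof (epsilon_spec (inhabits 0) (fun l => derivable_pt_lim (fun s => F (upd p i s)) (p i) l) (ex_intro _ l H)) as H2.
  cbv beta in H2. eapply uniqueness_limite; eauto.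
Qed.

Lemma deriv_loc F G x l : (exists e, e > 0 /\ forall s, Rabs (s - x) < e -> F s = G s) ->
  derivable_pt_lim G x l -> derivable_pt_lim F x l.
Proof.
  intros [e [He HFG]] HG eps Heps. destruct (HG eps Heps) as [d Hd].
  assert (Hm: 0 < Rmin d e) by (apply Rmin_pos; [apply cond_pos|lra]).
  exists (mkposreal _ Hm). intros h Hh Hhd. simpl in Hhd.
  assert (Hx : Rabs (x - x) < e) by (rewrite Rminus_diag_eq; [rewrite Rabs_R0; lra | reflexivity]).
  assert (Hxh : Rabs (x + h - x) < e) by (replace (x+h-x) with h by ring;
     eapply Rlt_le_trans; [exact Hhd | apply Rmin_r]).
  rewrite (HFG (x+h) Hxh), (HFG x Hx). apply Hd; auto.
  eapply Rlt_le_trans; [exact Hhd| apply Rmin_l].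
Qed.

Lemma dl_val F x l l' : derivable_pt_lim F x l' -> l' = l -> derivable_pt_lim F x l.
Proof. intros H ->; exact H. Qed.
Lemma dl_const (c x : R) : derivable_pt_lim (fun _ => c) x 0.
Proof. apply derivable_pt_lim_const. Qed.
Lemma dl_id x : derivable_pt_lim (fun s => s) x 1.
Proof. apply derivable_pt_lim_id. Qed.
Lemma dl_plus F G x a b : derivable_pt_lim F x a -> derivable_pt_lim G x b ->
  derivable_pt_lim (fun s => F s + G s) x (a + b).
Proof. intros; exact (derivable_pt_lim_plus _ _ _ _ _ H H0). Qed.
Lemma dl_minus F G x a b : derivable_pt_lim F x a -> derivable_pt_lim G x b ->
  derivable_pt_lim (fun s => F s - G s) x (a - b).
Proof. intros; exact (derivable_pt_lim_minus _ _ _ _ _ H H0). Qed.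
Lemma dl_mult F G x a b : derivable_pt_lim F x a -> derivable_pt_lim G x b ->
  derivable_pt_lim (fun s => F s * G s) x (a * G x + F x * b).
Proof. intros; exact (derivable_pt_lim_mult _ _ _ _ _ H H0). Qed.
Lemma dl_opp F x a : derivable_pt_lim F x a -> derivable_pt_lim (fun s => - F s) x (- a).
Proof. intros; exact (derivable_pt_lim_opp _ _ _ H). Qed.
Lemma dl_div F G x a b : derivable_pt_lim F x a -> derivable_pt_lim G x b -> G x <> 0 ->
  derivable_pt_lim (fun s => F s / G s) x ((a * G x - b * F x) / (G x)²).
Proof. intros; exact (derivable_pt_lim_div _ _ _ _ _ H H0 H1). Qed.
Lemma dl_pow F x a n : derivable_pt_lim F x a ->
  derivable_pt_lim (fun s => F s ^ n) x (INR n * F x ^ Init.Nat.pred n * a).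
Proof. intros. exact (derivable_pt_lim_comp F (fun y => y ^ n) x _ _ H (derivable_pt_lim_pow _ _)). Qed.
Lemma dl_exp F x a : derivable_pt_lim F x a ->
  derivable_pt_lim (fun s => exp (F s)) x (exp (F x) * a).
Proof. intros. exact (derivable_pt_lim_comp F exp x _ _ H (derivable_pt_lim_exp _)). Qed.

Ltac dstep hf hd := first [ apply dl_const | apply dl_id | apply hf | apply hd
  | apply dl_minus | apply dl_plus | apply dl_div | apply dl_opp | apply dl_pow
  | apply dl_mult | apply dl_exp ].
Ltac dsolve hf hd := eapply dl_val; [ repeat (dstep hf hd) | ].

Lemma dl_f (I : R -> Prop) (f : R -> R) (D : nat -> R -> R) :
  is_open_interval I -> smooth_on_with I f D ->
  forall x, I x -> derivable_pt_lim (fun s => f s) x (D 1%nat x).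
Proof.
  intros [_ [_ Ho]] [H0 Hd] x Hx.
  apply deriv_loc with (G := D 0%nat).
  - destruct (Ho x Hx) as [e [He Hs]]. exists e; split; auto.
    intros s Hs'. symmetry; apply H0, Hs, Hs'.
  - apply Hd; auto.
Qed.

Lemma dl_D1 (I : R -> Prop) (f : R -> R) (D : nat -> R -> R) :
  smooth_on_with I f D ->
  forall x, I x -> derivable_pt_lim (fun s => D 1%nat s) x (D 2%nat x).
Proof. intros [_ Hd] x Hx. apply Hd; auto. Qed.

Definition dgT (f : R -> R) (D : nat -> R -> R) (a b c : nat) (q : pt) : R :=
  match a, b, c with
  | 1%nat, 1%nat, 0%nat => 2 * f (q 0%nat) * D 1%nat (q 0%nat)
  | 2%nat, 2%nat, 0%nat => -2 * (exp (-2 * q 0%nat) * exp (-2 * q 1%nat))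
  | 2%nat, 2%nat, 1%nat => -2 * (exp (-2 * q 0%nat) * exp (-2 * q 1%nat))
  | 3%nat, 3%nat, 0%nat => -2 * (exp (-2 * q 0%nat) * exp (2 * q 1%nat))
  | 3%nat, 3%nat, 1%nat => 2 * (exp (-2 * q 0%nat) * exp (2 * q 1%nat))
  | _, _, _ => 0
  end.

Ltac idx i := destruct i as [|[|[|[|i]]]]; [ | | | | exfalso; lia ].

Lemma pd_g (I : R -> Prop) (f : R -> R) (D : nat -> R -> R) :
  is_open_interval I -> smooth_on_with I f D ->
  forall a b c q, (a < 4)%nat -> (b < 4)%nat -> (c < 4)%nat -> I (q 0%nat) ->
  pd (sol_metric f a b) c q = dgT f D a b c q.
Proof.
  intros Ho Hs a b c q Ha Hb Hc Hq.
  pose proof (dl_f I f D Ho Hs) as hf. pose proof (dl_D1 I f D Hs) as hd.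
  apply pd_eq.
  idx a; idx b; idx c; unfold sol_metric, sol_diag, dgT, upd; simpl;
  dsolve hf hd; try assumption; simpl; field.
Qed.
Definition GamT (f : R -> R) (D : nat -> R -> R) (k i j : nat) (q : pt) : R :=
  match k, i, j with
  | 1%nat, 0%nat, 1%nat | 1%nat, 1%nat, 0%nat => D 1%nat (q 0%nat) / f (q 0%nat)
  | 0%nat, 1%nat, 1%nat => - (f (q 0%nat) * D 1%nat (q 0%nat))
  | 2%nat, 0%nat, 2%nat | 2%nat, 2%nat, 0%nat | 2%nat, 1%nat, 2%nat | 2%nat, 2%nat, 1%nat => -1
  | 0%nat, 2%nat, 2%nat => exp (-2 * q 0%nat) * exp (-2 * q 1%nat)
  | 1%nat, 2%nat, 2%nat => exp (-2 * q 0%nat) * exp (-2 * q 1%nat) / f (q 0%nat) ^ 2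
  | 3%nat, 0%nat, 3%nat | 3%nat, 3%nat, 0%nat => -1
  | 3%nat, 1%nat, 3%nat | 3%nat, 3%nat, 1%nat => 1
  | 0%nat, 3%nat, 3%nat => exp (-2 * q 0%nat) * exp (2 * q 1%nat)
  | 1%nat, 3%nat, 3%nat => - (exp (-2 * q 0%nat) * exp (2 * q 1%nat) / f (q 0%nat) ^ 2)
  | _, _, _ => 0
  end.

Definition dGamT (f : R -> R) (D : nat -> R -> R) (k i j c : nat) (q : pt) : R :=
  let F := f (q 0%nat) in let F1 := D 1%nat (q 0%nat) in let F2 := D 2%nat (q 0%nat) in
  let A := exp (-2 * q 0%nat) * exp (-2 * q 1%nat) in
  let B := exp (-2 * q 0%nat) * exp (2 * q 1%nat) in
  match k, i, j with
  | 1%nat, 0%nat, 1%nat | 1%nat, 1%nat, 0%nat =>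
      match c with 0%nat => (F2 * F - F1 * F1) / F ^ 2 | _ => 0 end
  | 0%nat, 1%nat, 1%nat => match c with 0%nat => - (F1 * F1 + F * F2) | _ => 0 end
  | 0%nat, 2%nat, 2%nat => match c with 0%nat => -2 * A | 1%nat => -2 * A | _ => 0 end
  | 1%nat, 2%nat, 2%nat => match c with 0%nat => -2 * A / F ^ 2 - 2 * A * F1 / F ^ 3
                          | 1%nat => -2 * A / F ^ 2 | _ => 0 end
  | 0%nat, 3%nat, 3%nat => match c with 0%nat => -2 * B | 1%nat => 2 * B | _ => 0 end
  | 1%nat, 3%nat, 3%nat => match c with 0%nat => 2 * B / F ^ 2 + 2 * B * F1 / F ^ 3
                          | 1%nat => -2 * B / F ^ 2 | _ => 0 end
  | _, _, _ => 0
  end.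

Lemma chris_eq (I : R -> Prop) (f : R -> R) (D : nat -> R -> R) :
  is_open_interval I -> smooth_on_with I f D -> (forall t, I t -> f t > 0) ->
  forall k i j q, (k < 4)%nat -> (i < 4)%nat -> (j < 4)%nat -> I (q 0%nat) ->
  christoffel (sol_metric f) (sol_metric_inv f) k i j q = GamT f D k i j q.
Proof.
  intros Ho Hs Hp k i j q Hk Hi Hj Hq.
  assert (Hf : f (q 0%nat) <> 0) by (specialize (Hp _ Hq); lra).
  pose proof (exp_pos (-2 * q 0%nat)). pose proof (exp_pos (-2 * q 1%nat)).
  pose proof (exp_pos (2 * q 1%nat)). pose proof (Hp _ Hq).
  unfold christoffel, sum4.
  idx k; idx i; idx j;
  rewrite !(pd_g I f D Ho Hs) by (assumption || lia);
  unfold sol_metric_inv, sol_diag, dgT, GamT; simpl;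
  field; repeat split; try apply Rgt_not_eq; try lra; try assumption.
Qed.

Lemma pd_chris (I : R -> Prop) (f : R -> R) (D : nat -> R -> R) :
  is_open_interval I -> smooth_on_with I f D -> (forall t, I t -> f t > 0) ->
  forall p k i j c, (k < 4)%nat -> (i < 4)%nat -> (j < 4)%nat -> (c < 4)%nat -> I (p 0%nat) ->
  pd (christoffel (sol_metric f) (sol_metric_inv f) k i j) c p = dGamT f D k i j c p.
Proof.
  intros Ho Hs Hp p k i j c Hk Hi Hj Hc Hq.
  assert (Hf : f (p 0%nat) <> 0) by (specialize (Hp _ Hq); lra).
  pose proof (dl_f I f D Ho Hs) as hf. pose proof (dl_D1 I f D Hs) as hd.
  apply pd_eq.
  apply deriv_loc with (G := fun s => GamT f D k i j (upd p c s)).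
  { pose proof Ho as [_ [_ Hop]]. destruct (Hop _ Hq) as [e [He Hn]].
    exists e; split; auto. intros s Hs'.
    apply (chris_eq I f D Ho Hs Hp); try lia.
    unfold upd. destruct (Nat.eqb 0 c) eqn:E.
    - apply Nat.eqb_eq in E; subst c. apply Hn; exact Hs'.
    - exact Hq. }
  idx k; idx i; idx j; idx c; unfold GamT, dGamT, upd; simpl;
  dsolve hf hd; try assumption; simpl; unfold Rsqr; try field; auto.
Qed.
Definition RupT (f : R -> R) (D : nat -> R -> R) (m i j k : nat) (p : pt) : R :=
  dGamT f D m j k i p - dGamT f D m i k j p
  + sum4 (fun n => GamT f D n j k p * GamT f D m i n p - GamT f D n i k p * GamT f D m j n p).

Lemma rup_eq (I : R -> Prop) (f : R -> R) (D : nat -> R -> R) :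
  is_open_interval I -> smooth_on_with I f D -> (forall t, I t -> f t > 0) ->
  forall p m i j k, (m < 4)%nat -> (i < 4)%nat -> (j < 4)%nat -> (k < 4)%nat -> I (p 0%nat) ->
  riemann_up (sol_metric f) (sol_metric_inv f) m i j k p = RupT f D m i j k p.
Proof.
  intros Ho Hs Hp p m i j k Hm Hi Hj Hk Hq.
  unfold riemann_up, RupT.
  rewrite !(pd_chris I f D Ho Hs Hp) by (assumption || lia).
  unfold sum4.
  rewrite !(chris_eq I f D Ho Hs Hp) by (assumption || lia).
  reflexivity.
Qed.

Definition RTc (K01 K02 K03 K12 K13 K23 c2 c3 : R) (i j k l : nat) : R :=
  match i, j, k, l with
  | 0%nat, 1%nat, 0%nat, 1%nat => (-K01)
  | 0%nat, 1%nat, 1%nat, 0%nat => K01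
  | 0%nat, 2%nat, 0%nat, 2%nat => (-K02)
  | 0%nat, 2%nat, 1%nat, 2%nat => (-c2)
  | 0%nat, 2%nat, 2%nat, 0%nat => K02
  | 0%nat, 2%nat, 2%nat, 1%nat => c2
  | 0%nat, 3%nat, 0%nat, 3%nat => (-K03)
  | 0%nat, 3%nat, 1%nat, 3%nat => (-c3)
  | 0%nat, 3%nat, 3%nat, 0%nat => K03
  | 0%nat, 3%nat, 3%nat, 1%nat => c3
  | 1%nat, 0%nat, 0%nat, 1%nat => K01
  | 1%nat, 0%nat, 1%nat, 0%nat => (-K01)
  | 1%nat, 2%nat, 0%nat, 2%nat => (-c2)
  | 1%nat, 2%nat, 1%nat, 2%nat => (-K12)
  | 1%nat, 2%nat, 2%nat, 0%nat => c2
  | 1%nat, 2%nat, 2%nat, 1%nat => K12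
  | 1%nat, 3%nat, 0%nat, 3%nat => (-c3)
  | 1%nat, 3%nat, 1%nat, 3%nat => (-K13)
  | 1%nat, 3%nat, 3%nat, 0%nat => c3
  | 1%nat, 3%nat, 3%nat, 1%nat => K13
  | 2%nat, 0%nat, 0%nat, 2%nat => K02
  | 2%nat, 0%nat, 1%nat, 2%nat => c2
  | 2%nat, 0%nat, 2%nat, 0%nat => (-K02)
  | 2%nat, 0%nat, 2%nat, 1%nat => (-c2)
  | 2%nat, 1%nat, 0%nat, 2%nat => c2
  | 2%nat, 1%nat, 1%nat, 2%nat => K12
  | 2%nat, 1%nat, 2%nat, 0%nat => (-c2)
  | 2%nat, 1%nat, 2%nat, 1%nat => (-K12)
  | 2%nat, 3%nat, 2%nat, 3%nat => (-K23)
  | 2%nat, 3%nat, 3%nat, 2%nat => K23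
  | 3%nat, 0%nat, 0%nat, 3%nat => K03
  | 3%nat, 0%nat, 1%nat, 3%nat => c3
  | 3%nat, 0%nat, 3%nat, 0%nat => (-K03)
  | 3%nat, 0%nat, 3%nat, 1%nat => (-c3)
  | 3%nat, 1%nat, 0%nat, 3%nat => c3
  | 3%nat, 1%nat, 1%nat, 3%nat => K13
  | 3%nat, 1%nat, 3%nat, 0%nat => (-c3)
  | 3%nat, 1%nat, 3%nat, 1%nat => (-K13)
  | 3%nat, 2%nat, 2%nat, 3%nat => K23
  | 3%nat, 2%nat, 3%nat, 2%nat => (-K23)
  | _, _, _, _ => 0
  end.

Definition RTp (f : R -> R) (D : nat -> R -> R) (p : pt) :=
  let F := f (p 0%nat) in let F1 := D 1%nat (p 0%nat) in let F2 := D 2%nat (p 0%nat) in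
  let A := exp (-2 * p 0%nat) * exp (-2 * p 1%nat) in
  let B := exp (-2 * p 0%nat) * exp (2 * p 1%nat) in
  RTc (- (F * F2)) (- A) (- B) (A * (F * F1 - 1)) (B * (F * F1 - 1))
      (A * B * (1 / F ^ 2 - 1)) (- (A * (1 + F1 / F))) (B * (1 + F1 / F)).

Lemma riem_eq (I : R -> Prop) (f : R -> R) (D : nat -> R -> R) :
  is_open_interval I -> smooth_on_with I f D -> (forall t, I t -> f t > 0) ->
  forall p i j k l, (i < 4)%nat -> (j < 4)%nat -> (k < 4)%nat -> (l < 4)%nat -> I (p 0%nat) ->
  riemann (sol_metric f) (sol_metric_inv f) i j k l p = RTp f D p i j k l.
Proof.
  intros Ho Hs Hp p i j k l Hi Hj Hk Hl Hq.
  assert (Hf : f (p 0%nat) <> 0) by (specialize (Hp _ Hq); lra).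
  unfold riemann, sum4.
  rewrite !(rup_eq I f D Ho Hs Hp) by (assumption || lia).
  idx i; idx j; idx k; idx l;
  unfold RTp, RTc, RupT, dGamT, GamT, sum4, sol_metric, sol_diag; simpl;
  field; auto.
Qed.
Definition wv (u v : pt) (a b : nat) : R := u a * v b - u b * v a.

Definition Qf (K01 K02 K03 K12 K13 K23 c2 c3 : R) (u v : pt) : R :=
  K01 * wv u v 0 1 ^ 2 + K23 * wv u v 2 3 ^ 2
  + (K02 * wv u v 0 2 ^ 2 + 2 * c2 * wv u v 0 2 * wv u v 1 2 + K12 * wv u v 1 2 ^ 2)
  + (K03 * wv u v 0 3 ^ 2 + 2 * c3 * wv u v 0 3 * wv u v 1 3 + K13 * wv u v 1 3 ^ 2).

Lemma num_identity (Rf : nat -> nat -> nat -> nat -> R) K01 K02 K03 K12 K13 K23 c2 c3 (u v : pt) :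
  (forall i j k l, (i < 4)%nat -> (j < 4)%nat -> (k < 4)%nat -> (l < 4)%nat ->
     Rf i j k l = RTc K01 K02 K03 K12 K13 K23 c2 c3 i j k l) ->
  sum4 (fun i => sum4 (fun j => sum4 (fun k => sum4 (fun l =>
     Rf i j k l * u i * v j * v k * u l)))) = Qf K01 K02 K03 K12 K13 K23 c2 c3 u v.
Proof.
  intro H. unfold sum4.
  repeat (rewrite H by lia).
  unfold RTc, Qf, wv. ring.
Qed.

Lemma sq_pos z : z <> 0 -> 0 < z ^ 2.
Proof. intro. simpl. rewrite Rmult_1_r. apply Rsqr_pos_lt; auto. Qed.

Lemma block_neg a b c x y : a < 0 -> a * c > b ^ 2 -> a * x ^ 2 + 2 * b * x * y + c * y ^ 2 <= 0.
Proof.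
  intros Ha Hac.
  assert (E : a * (a * x ^ 2 + 2 * b * x * y + c * y ^ 2) = (a * x + b * y) ^ 2 + (a * c - b ^ 2) * y ^ 2) by ring.
  assert (0 <= (a * x + b * y) ^ 2 + (a * c - b ^ 2) * y ^ 2) by
    (apply Rplus_le_le_0_compat; [apply pow2_ge_0 | apply Rmult_le_pos; [lra| apply pow2_ge_0]]).
  nra.
Qed.

Lemma block_lt a b c x y : a < 0 -> a * c > b ^ 2 -> (x <> 0 \/ y <> 0) ->
  a * x ^ 2 + 2 * b * x * y + c * y ^ 2 < 0.
Proof.
  intros Ha Hac Hxy.
  assert (E : a * (a * x ^ 2 + 2 * b * x * y + c * y ^ 2) = (a * x + b * y) ^ 2 + (a * c - b ^ 2) * y ^ 2) by ring.
  assert (0 < (a * x + b * y) ^ 2 + (a * c - b ^ 2) * y ^ 2).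
  { destruct (Req_dec y 0) as [Hy|Hy].
    - subst y. destruct Hxy as [Hx|Hx]; [|lra].
      assert (0 < (a*x)^2) by (apply sq_pos; apply Rmult_integral_contrapositive; split; lra).
      replace (a * x + b * 0) with (a * x) by ring. nra.
    - assert (0 < y ^ 2) by (apply sq_pos; auto).
      pose proof (pow2_ge_0 (a * x + b * y)). nra. }
  nra.
Qed.

Lemma w_nonzero (u v : pt) : lin_indep4 u v ->
  wv u v 0 1 <> 0 \/ wv u v 2 3 <> 0 \/ (wv u v 0 2 <> 0 \/ wv u v 1 2 <> 0)
  \/ (wv u v 0 3 <> 0 \/ wv u v 1 3 <> 0).
Proof.
  intro Hli. unfold wv.
  destruct (Req_dec (u 0%nat * v 1%nat - u 1%nat * v 0%nat) 0) as [h01|]; [|tauto].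
  destruct (Req_dec (u 2%nat * v 3%nat - u 3%nat * v 2%nat) 0) as [h23|]; [|tauto].
  destruct (Req_dec (u 0%nat * v 2%nat - u 2%nat * v 0%nat) 0) as [h02|]; [|tauto].
  destruct (Req_dec (u 1%nat * v 2%nat - u 2%nat * v 1%nat) 0) as [h12|]; [|tauto].
  destruct (Req_dec (u 0%nat * v 3%nat - u 3%nat * v 0%nat) 0) as [h03|]; [|tauto].
  destruct (Req_dec (u 1%nat * v 3%nat - u 3%nat * v 1%nat) 0) as [h13|]; [|tauto].
  exfalso.
  destruct (Req_dec (u 0%nat) 0) as [u0|u0].
  2: { destruct (Hli (v 0%nat) (- u 0%nat)) as [_ Hb]; [|lra].
       intros i Hi. idx i; lra. }
  destruct (Req_dec (u 1%nat) 0) as [u1|u1].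
  2: { destruct (Hli (v 1%nat) (- u 1%nat)) as [_ Hb]; [|lra].
       intros i Hi. idx i; lra. }
  destruct (Req_dec (u 2%nat) 0) as [u2|u2].
  2: { destruct (Hli (v 2%nat) (- u 2%nat)) as [_ Hb]; [|lra].
       intros i Hi. idx i; lra. }
  destruct (Req_dec (u 3%nat) 0) as [u3|u3].
  2: { destruct (Hli (v 3%nat) (- u 3%nat)) as [_ Hb]; [|lra].
       intros i Hi. idx i; lra. }
  destruct (Hli 1 0) as [Ha _]; [|lra].
  intros i Hi. idx i; subst; rewrite ?u0, ?u1, ?u2, ?u3; ring.
Qed.
Theorem mainTheorem2 (I : R -> Prop) (f : R -> R) (D : nat -> R -> R) :
  is_open_interval I ->
  smooth_on_with I f D ->
  (forall t, I t -> f t > 0) ->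
  (forall t, I t -> f t > 1) ->
  (forall t, I t -> D 1%nat t < 0) ->
  (forall t, I t -> D 2%nat t > 0) ->
  (forall t, I t -> 1 - f t * D 1%nat t > (1 + D 1%nat t / f t) ^ 2) ->
  forall p u v : pt, I (p 0%nat) -> lin_indep4 u v ->
    sectional_curvature (sol_metric f) (sol_metric_inv f) p u v < 0.
Proof.
  intros Ho Hs Hp H1 Hd1 Hd2 Hc p u v Hq Hli.
  pose proof (Hp _ Hq) as HF. pose proof (H1 _ Hq) as HF1.
  pose proof (Hd2 _ Hq) as HD2. pose proof (Hc _ Hq) as HC.
  set (F := f (p 0%nat)) in *. set (F1 := D 1%nat (p 0%nat)) in *.
  set (F2 := D 2%nat (p 0%nat)) in *.
  set (A := exp (-2 * p 0%nat) * exp (-2 * p 1%nat)).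
  set (B := exp (-2 * p 0%nat) * exp (2 * p 1%nat)).
  assert (HA : 0 < A) by (apply Rmult_lt_0_compat; apply exp_pos).
  assert (HB : 0 < B) by (apply Rmult_lt_0_compat; apply exp_pos).
  unfold sectional_curvature.
  match goal with |- ?N / ?G < 0 =>
    assert (HN : N = Qf (- (F * F2)) (- A) (- B) (A * (F * F1 - 1)) (B * (F * F1 - 1))
      (A * B * (1 / F ^ 2 - 1)) (- (A * (1 + F1 / F))) (B * (1 + F1 / F)) u v);
    [ apply (num_identity (fun i j k l => riemann (sol_metric f) (sol_metric_inv f) i j k l p));
      intros i j k l Hi Hj Hk Hl; exact (riem_eq I f D Ho Hs Hp p i j k l Hi Hj Hk Hl Hq)
    | assert (HG : G = F ^ 2 * wv u v 0 1 ^ 2 + A * wv u v 0 2 ^ 2 + B * wv u v 0 3 ^ 2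
          + F ^ 2 * A * wv u v 1 2 ^ 2 + F ^ 2 * B * wv u v 1 3 ^ 2 + A * B * wv u v 2 3 ^ 2);
      [ unfold gdot, sum4, sol_metric, sol_diag, wv; simpl; fold F A B; ring | ] ]
  end.
  rewrite HN, HG.
  assert (HFn : F <> 0) by lra.
  assert (HF2 : 1 < F ^ 2) by nra.
  assert (Hq2 : 0 < F ^ 2) by nra.
  assert (HK01 : - (F * F2) < 0) by nra.
  assert (HK23 : A * B * (1 / F ^ 2 - 1) < 0).
  { assert (HAB : 0 < A * B) by (apply Rmult_lt_0_compat; auto).
    assert (1 / F ^ 2 < 1) by (apply (Rmult_lt_reg_r (F ^ 2)); [lra|]; field_simplify; lra).
    nra. }
  pose proof (pow2_ge_0 (1 + F1 / F)) as Hsq.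
  assert (Hblk : forall X, 0 < X -> (- X) * (X * (F * F1 - 1)) > (X * (1 + F1 / F)) ^ 2
            /\ (- X) * (X * (F * F1 - 1)) > (- (X * (1 + F1 / F))) ^ 2).
  { intros X HX.
    assert (E1 : (- X) * (X * (F * F1 - 1)) - (X * (1 + F1 / F)) ^ 2
                = X ^ 2 * ((1 - F * F1) - (1 + F1 / F) ^ 2)) by (field; auto).
    assert (0 < X ^ 2 * ((1 - F * F1) - (1 + F1 / F) ^ 2)) by
      (apply Rmult_lt_0_compat; [apply sq_pos; lra | lra]).
    split; [lra|]. replace ((- (X * (1 + F1 / F))) ^ 2) with ((X * (1 + F1 / F)) ^ 2) by ring. lra. }
  destruct (Hblk A HA) as [_ HbA]. destruct (Hblk B HB) as [HbB _].
  assert (HQ : Qf (- (F * F2)) (- A) (- B) (A * (F * F1 - 1)) (B * (F * F1 - 1))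
      (A * B * (1 / F ^ 2 - 1)) (- (A * (1 + F1 / F))) (B * (1 + F1 / F)) u v < 0).
  { unfold Qf.
    pose proof (block_neg (- A) _ _ (wv u v 0 2) (wv u v 1 2) ltac:(lra) HbA) as N2.
    pose proof (block_neg (- B) _ _ (wv u v 0 3) (wv u v 1 3) ltac:(lra) HbB) as N3.
    pose proof (pow2_ge_0 (wv u v 0 1)). pose proof (pow2_ge_0 (wv u v 2 3)).
    assert (T1 : - (F * F2) * wv u v 0 1 ^ 2 <= 0) by nra.
    assert (T2 : A * B * (1 / F ^ 2 - 1) * wv u v 2 3 ^ 2 <= 0) by nra.
    destruct (w_nonzero u v Hli) as [W|[W|[W|W]]].
    - pose proof (sq_pos _ W). nra.
    - pose proof (sq_pos _ W). nra.
    - pose proof (block_lt (- A) _ _ (wv u v 0 2) (wv u v 1 2) ltac:(lra) HbA W). lra.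
    - pose proof (block_lt (- B) _ _ (wv u v 0 3) (wv u v 1 3) ltac:(lra) HbB W). lra. }
  assert (HGp : 0 < F ^ 2 * wv u v 0 1 ^ 2 + A * wv u v 0 2 ^ 2 + B * wv u v 0 3 ^ 2
          + F ^ 2 * A * wv u v 1 2 ^ 2 + F ^ 2 * B * wv u v 1 3 ^ 2 + A * B * wv u v 2 3 ^ 2).
  { pose proof (pow2_ge_0 (wv u v 0 1)). pose proof (pow2_ge_0 (wv u v 2 3)).
    pose proof (pow2_ge_0 (wv u v 0 2)). pose proof (pow2_ge_0 (wv u v 1 2)).
    pose proof (pow2_ge_0 (wv u v 0 3)). pose proof (pow2_ge_0 (wv u v 1 3)).
    assert (0 <= F ^ 2 * wv u v 0 1 ^ 2) by nra.
    assert (0 <= A * wv u v 0 2 ^ 2) by nra.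
    assert (0 <= B * wv u v 0 3 ^ 2) by nra.
    assert (0 <= F ^ 2 * A * wv u v 1 2 ^ 2) by (apply Rmult_le_pos; nra).
    assert (0 <= F ^ 2 * B * wv u v 1 3 ^ 2) by (apply Rmult_le_pos; nra).
    assert (0 <= A * B * wv u v 2 3 ^ 2) by (apply Rmult_le_pos; nra).
    destruct (w_nonzero u v Hli) as [W|[W|[[W|W]|[W|W]]]]; pose proof (sq_pos _ W).
    - assert (0 < F ^ 2 * wv u v 0 1 ^ 2) by nra. lra.
    - assert (0 < A * B * wv u v 2 3 ^ 2) by (apply Rmult_lt_0_compat; nra). lra.
    - assert (0 < A * wv u v 0 2 ^ 2) by nra. lra.
    - assert (0 < F ^ 2 * A * wv u v 1 2 ^ 2) by (apply Rmult_lt_0_compat; nra). lra.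
    - assert (0 < B * wv u v 0 3 ^ 2) by nra. lra.
    - assert (0 < F ^ 2 * B * wv u v 1 3 ^ 2) by (apply Rmult_lt_0_compat; nra). lra. }
  unfold Rdiv. apply Rmult_neg_pos; [exact HQ|]. apply Rinv_0_lt_compat; exact HGp.
Qed.
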